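(* Let $X$ be a non-trivial vector space over a field $\mathbb{k}$, let $T:X\to X$ be a linear operator with no non-trivial finite dimensional invariant subspaces, and let $A\subseteq X$ be a $T$-independent set. Then $F(A,T)$ is a linear subspace of $X$ invariant for $T$, and for every $x\in F(A,T)$ and $a\in A$ the rational function $f_{x,a}=\frac{p_a}{q}\in\mathcal{R}$, where $q\in\mathcal{P}^*$ and $\{p_a\}_{a\in A}\in\mathcal{P}^{(A)}$ satisfy $q(T)x=\sum_{a\in A}p_a(T)a$, does not depend on the choice of such $q$ and $\{p_a\}$. Moreover, the map $J:F(A,T)\to\mathcal{R}^{(A)}$, $Jx=\{f_{x,a}\}_{a\in A}$, is well defined, linear, injective, and satisfies $JTx=M^{(A)}Jx$ for every $x\in F(A,T)$. In particular, $J(F(A,T))$ is invariant under $M^{(A)}$ and the restriction $T|_{F(A,T)}$ is similar (via $J$) to the restriction of $M^{(A)}$ to $J(F(A,T))$.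
   Context: $\mathcal{P}=\mathbb{k}[t]$, $\mathcal{P}^*=\mathcal{P}\setminus\{0\}$, $\mathcal{R}=\mathbb{k}(t)$. For a set $A$ and a vector space $Z$, $Z^{(A)}=\{z\in Z^A:\{\alpha\in A:z_\alpha\neq0\}\text{ is finite}\}$. $M:\mathcal{R}\to\mathcal{R}$ is $Mf(z)=zf(z)$ and $M^{(A)}$ on $\mathcal{R}^{(A)}$ is $(M^{(A)}f)_\alpha=Mf_\alpha$. Vectors $x_1,\dots,x_n\in X$ are $T$-independent if for any polynomials $p_1,\dots,p_n\in\mathcal{P}$ the equality $p_1(T)x_1+\dots+p_n(T)x_n=0$ implies $p_j=0$ for all $j$; a set $A\subseteq X$ is $T$-independent if any pairwise different $x_1,\dots,x_n\in A$ are $T$-independent. $E(A,T)=\mathrm{span}\bigl(\bigcup_{n\geq0}T^n(A)\bigr)$ and $F(A,T)=\bigcup_{p\in\mathcal{P}^*}p(T)^{-1}(E(A,T))$; equivalently $F(A,T)$ is the set of $x\in X$ for which $q(T)x=\sum_{a\in A}p_a(T)a$ for some $q\in\mathcal{P}^*$ and $\{p_a\}_{a\in A}\in\mathcal{P}^{(A)}$. A non-trivial subspace means one different from $\{0\}$; invariant means mapped into itself. *)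

(* Defs.v *)
From HB Require Import structures.
From mathcomp Require Import all_boot all_order all_algebra.
From mathcomp Require Import fraction.
Set Implicit Arguments. Unset Strict Implicit. Unset Printing Implicit Defensive.
Import Order.TTheory GRing.Theory Num.Theory.
Local Open Scope ring_scope.

Section Defs.
Variables (k : fieldType) (X : lmodType k).

Definition ratfun := {fraction {poly k}}.
Definition tofracp (p : {poly k}) : ratfun := FracField.tofrac p.

Definition peval (p : {poly k}) (T : X -> X) (x : X) : X :=
  \sum_(i < size p) p`_i *: iter i T x.

Definition inspan (s : seq X) (x : X) : Prop :=
  exists c : X -> k, x = \sum_(v <- s) c v *: v.

(* T has no non-trivial finite-dimensional invariant subspace:
   every finite-dimensional subspace (= span of a finite family) that is
   T-invariant is {0}. *)
Definition no_fd_invariant (T : X -> X) : Prop :=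
  forall s : seq X, (forall x, inspan s x -> inspan s (T x)) ->
    forall x, inspan s x -> x = 0.

Definition T_independent (T : X -> X) (A : X -> Prop) : Prop :=
  forall (s : seq X), uniq s -> (forall a, a \in s -> A a) ->
  forall p : X -> {poly k}, \sum_(a <- s) peval (p a) T a = 0 ->
  forall a, a \in s -> p a = 0.

Definition E_set (A : X -> Prop) (T : X -> X) (x : X) : Prop :=
  exists (s : seq (nat * X)) (c : nat * X -> k),
    (forall na, na \in s -> A na.2) /\
    x = \sum_(na <- s) c na *: iter na.1 T na.2.

Definition F_set (A : X -> Prop) (T : X -> X) (x : X) : Prop :=
  exists p : {poly k}, p != 0 /\ E_set A T (peval p T x).

Definition is_rep (A : X -> Prop) (T : X -> X) (x : X)
    (q : {poly k}) (p : X -> {poly k}) : Prop :=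
  q != 0 /\
  exists s : seq X, [/\ uniq s, (forall a, a \in s -> A a),
    (forall a, a \notin s -> p a = 0) &
    peval q T x = \sum_(a <- s) peval (p a) T a].

Definition in_RA (A : X -> Prop) (f : X -> ratfun) : Prop :=
  (forall a, ~ A a -> f a = 0) /\
  exists s : seq X, forall a, a \notin s -> f a = 0.

Definition MA (f : X -> ratfun) : X -> ratfun :=
  fun a => tofracp 'X * f a.

Definition scaleRA (c : k) (f : X -> ratfun) : X -> ratfun :=
  fun a => tofracp c%:P * f a.

End Defs.

(* Main.v *)
Require Import Defs.
From HB Require Import structures.
From mathcomp Require Import all_boot all_order all_algebra.
From mathcomp Require Import fraction.
From mathcomp Require Import ring.
From Stdlib Require Import ClassicalEpsilon FunctionalExtensionality.
Import GRing.Theory.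
Local Open Scope ring_scope.

Lemma fieldid (F : fieldType) (a b c d e : F) : b != 0 -> d != 0 ->
  (e * (d * a) + b * c) / (b * d) = e * (a / b) + c / d.
Proof. move=> hb hd. field. by apply/andP. Qed.

Lemma ratid (k : fieldType) (P1 Q1 P2 Q2 : {poly k}) (c : k) : Q1 != 0 -> Q2 != 0 ->
  tofracp (c *: (Q2 * P1) + Q1 * P2) / tofracp (Q1 * Q2) =
  tofracp c%:P * (tofracp P1 / tofracp Q1) + tofracp P2 / tofracp Q2 :> ratfun k.
Proof.
move=> h1 h2.
rewrite /tofracp -mul_polyC !tofracD !tofracM.
apply: (@fieldid {fraction {poly k}}); by rewrite tofrac_eq0.
Qed.

Section Peval.
Variables (k : fieldType) (X : lmodType k) (T : {linear X -> X}) (A : X -> Prop).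

Lemma iter_lin i (c : k) (x y : X) :
  iter i T (c *: x + y) = c *: iter i T x + iter i T y.
Proof. by elim: i => [|i IH] //=; rewrite IH linearP. Qed.

Lemma iter0 i : iter i T 0 = 0.
Proof. by elim: i => [|i IH] //=; rewrite IH linear0. Qed.

Lemma iterT i x : iter i T (T x) = T (iter i T x).
Proof. by rewrite -iterSr iterS. Qed.

Lemma peval_ext (p : {poly k}) n x : (size p <= n)%N ->
  peval p T x = \sum_(i < n) p`_i *: iter i T x.
Proof.
move=> le; rewrite /peval (big_ord_widen n (fun i => p`_i *: iter i T x) le).
rewrite big_mkcond /=; apply: eq_bigr => i _.
by case: ifP => // /negbT; rewrite -leqNgt => H; rewrite nth_default // scale0r.
Qed.

Lemma peval0p x : peval 0 T x = 0.
Proof. by rewrite /peval size_poly0 big_ord0. Qed.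

Lemma pevalD p q x : peval (p + q) T x = peval p T x + peval q T x.
Proof.
set n := maxn (size p) (size q).
rewrite (peval_ext _ n); last by apply: (leq_trans (size_polyD _ _)).
rewrite (peval_ext p n) ?leq_maxl // (peval_ext q n) ?leq_maxr //.
by rewrite -big_split /=; apply: eq_bigr => i _; rewrite coefD scalerDl.
Qed.

Lemma pevalZ (c : k) p x : peval (c *: p) T x = c *: peval p T x.
Proof.
rewrite (peval_ext _ (size p)) ?size_scale_leq // /peval scaler_sumr.
by apply: eq_bigr => i _; rewrite coefZ scalerA.
Qed.

Lemma pevalC (c : k) x : peval c%:P T x = c *: x.
Proof.
rewrite (peval_ext _ 1) ?size_polyC_leq1 // big_ord1 coefC /=.
done.
Qed.

Lemma peval1 x : peval 1 T x = x.
Proof. by rewrite -[1]/(1%:P) pevalC scale1r. Qed.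

Lemma peval_linx p (c : k) x y :
  peval p T (c *: x + y) = c *: peval p T x + peval p T y.
Proof.
rewrite /peval scaler_sumr -big_split /=; apply: eq_bigr => i _.
by rewrite iter_lin scalerDr !scalerA mulrC.
Qed.

Lemma peval_x0 p : peval p T 0 = 0.
Proof. rewrite /peval; apply: big1 => i _; by rewrite iter0 scaler0. Qed.

Lemma peval_addx p x y : peval p T (x + y) = peval p T x + peval p T y.
Proof. by have := peval_linx p 1 x y; rewrite !scale1r. Qed.

Lemma peval_scalex p c x : peval p T (c *: x) = c *: peval p T x.
Proof. by have := peval_linx p c x 0; rewrite !addr0 peval_x0 addr0. Qed.

Lemma peval_sumx (I : Type) p (s : seq I) (F : I -> X) :
  peval p T (\sum_(i <- s) F i) = \sum_(i <- s) peval p T (F i).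
Proof. exact: (big_morph (peval p T) (peval_addx p) (peval_x0 p)). Qed.

Lemma pevalT p x : T (peval p T x) = peval p T (T x).
Proof.
rewrite /peval linear_sum; apply: eq_bigr => i _.
by rewrite linearZ iterT.
Qed.

Lemma pevalX p x : peval ('X * p) T x = T (peval p T x).
Proof.
rewrite (peval_ext _ (size p).+1); last first.
  by apply: (leq_trans (size_mul_leq _ _)); rewrite size_polyX.
rewrite big_ord_recl coefXM /= scale0r add0r /peval linear_sum.
by apply: eq_bigr => i _; rewrite coefXM /= linearZ /=.
Qed.

Lemma pevalXp x : peval 'X T x = T x.
Proof. by rewrite -[ 'X]mulr1 pevalX peval1. Qed.

Lemma pevalM p q x : peval (p * q) T x = peval p T (peval q T x).
Proof.
elim/poly_ind: p q x => [|p c IH] q x; first by rewrite mul0r !peval0p.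
rewrite mulrDl pevalD -mulrA IH pevalX mul_polyC pevalZ pevalD pevalC.
congr (_ + _); by rewrite IH pevalXp pevalT.
Qed.

Lemma big_support (V : eqType) (Y : zmodType) (S S' : seq V) (F : V -> Y) :
  uniq S -> uniq S' -> {subset S <= S'} -> (forall a, a \notin S -> F a = 0) ->
  \sum_(a <- S') F a = \sum_(a <- S) F a.
Proof.
move=> uS uS' sub F0.
rewrite (eq_bigr (fun a => if a \in S then F a else 0)); last first.
  by move=> a _; case: ifP => // /negbT /F0.
rewrite -big_mkcond -big_filter; apply: perm_big.
apply: uniq_perm; first exact: filter_uniq.
  done.
by move=> a; rewrite mem_filter; case H: (a \in S) => //=; rewrite sub.
Qed.


Definition urep (y : X) (s : seq X) (p : X -> {poly k}) : Prop :=
  [/\ uniq s, (forall a, a \in s -> A a),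
    (forall a, a \notin s -> p a = 0) &
    y = \sum_(a <- s) peval (p a) T a].

Lemma urep0 : urep 0 [::] (fun _ => 0).
Proof. by split => //; rewrite big_nil. Qed.

Lemma urep_ext {y s p} : urep y s p -> forall s', uniq s' -> {subset s <= s'} ->
  (forall a, a \in s' -> A a) -> urep y s' p.
Proof.
move=> [us sA p0 ->] s' us' sub s'A; split => //.
  move=> a nas'; apply: p0; apply/negP => /sub; by rewrite (negbTE nas').
apply: esym; apply: big_support => // a /p0 ->; exact: peval0p.
Qed.

Lemma urep_add {y z s s' p p'} : urep y s p -> urep z s' p' ->
  urep (y + z) (undup (s ++ s')) (fun a => p a + p' a).
Proof.
move=> r1 r2.
have sA : forall a, a \in undup (s ++ s') -> A a.
  move=> a; rewrite mem_undup mem_cat => /orP [];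
   [case: r1 => _ H _ _| case: r2 => _ H _ _]; exact: H.
have s1 : {subset s <= undup (s ++ s')}.
  by move=> a h; rewrite mem_undup mem_cat h.
have s2 : {subset s' <= undup (s ++ s')}.
  by move=> a h; rewrite mem_undup mem_cat h orbT.
have [_ _ p0 ->] := urep_ext r1 _ (undup_uniq _) s1 sA.
have [_ _ p0' ->] := urep_ext r2 _ (undup_uniq _) s2 sA.
split => //; first exact: undup_uniq.
  by move=> a /[dup] /p0 -> /p0' ->; rewrite addr0.
by rewrite -big_split; apply: eq_bigr => a _; rewrite pevalD.
Qed.

Lemma urep_scale {y s p} c : urep y s p -> urep (c *: y) s (fun a => c *: p a).
Proof.
move=> [us sA p0 ->]; split => //; first by move=> a /p0 ->; rewrite scaler0.
by rewrite scaler_sumr; apply: eq_bigr => a _; rewrite pevalZ.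
Qed.

Lemma urep_peval {y s p} q : urep y s p -> urep (peval q T y) s (fun a => q * p a).
Proof.
move=> [us sA p0 ->]; split => //; first by move=> a /p0 ->; rewrite mulr0.
by rewrite peval_sumx; apply: eq_bigr => a _; rewrite pevalM.
Qed.

Lemma urep_single {a} r : A a ->
  urep (peval r T a) [:: a] (fun b => if b == a then r else 0).
Proof.
move=> Aa; split => //.
- by move=> b; rewrite inE => /eqP ->.
- by move=> b; rewrite inE => /negbTE ->.
- by rewrite big_seq1 eqxx.
Qed.

Lemma E_urep y : E_set A T y -> exists s p, urep y s p.
Proof.
case=> s [c [sA ->]]; elim: s sA => [|na s IH] sA.
  by exists [::], (fun _ => 0); rewrite big_nil; exact: urep0.
have [|s' [p' r']] := IH; first by move=> nb h; apply: sA; rewrite inE h orbT.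
have Aa : A na.2 by apply: sA; rewrite inE eqxx.
have := urep_add (urep_single (c na *: 'X^(na.1)) Aa) r'.
rewrite big_cons pevalZ.
have -> : peval 'X^(na.1) T na.2 = iter na.1 T na.2.
  rewrite (@peval_ext _ na.1.+1) ?size_polyXn //.
  rewrite big_ord_recr /= big1 ?coefXn ?eqxx ?scale1r ?add0r //.
  by move=> i _; rewrite coefXn ltn_eqF // scale0r.
move=> H; by exists (undup ([:: na.2] ++ s')), (fun a : X => (if a == na.2 then c na *: 'X^(na.1) else 0) + p' a).
Qed.

Lemma urep_E {y s p} : urep y s p -> E_set A T y.
Proof.
move=> [us sA p0 ->].
exists (flatten [seq [seq (i, a) | i <- index_iota 0 (size (p a))] | a <- s]).
exists (fun na => (p na.2)`_na.1); split.
  move=> na /flatten_mapP [a as_ /mapP [i _ ->]] /=; exact: sA.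
rewrite big_flatten big_map; apply: eq_bigr => a _.
by rewrite big_map /= big_mkord.
Qed.


Lemma pevalB p q x : peval (p - q) T x = peval p T x - peval q T x.
Proof. by rewrite pevalD -[- q]scaleN1r pevalZ scaleN1r. Qed.

Lemma urep_uniq y s s' p p' : T_independent T A ->
  urep y s p -> urep y s' p' -> forall a, p a = p' a.
Proof.
move=> ind r1 r2.
have sA : forall a, a \in undup (s ++ s') -> A a.
  move=> a; rewrite mem_undup mem_cat => /orP [];
   [case: r1 => _ H _ _| case: r2 => _ H _ _]; exact: H.
have s1 : {subset s <= undup (s ++ s')}.
  by move=> a h; rewrite mem_undup mem_cat h.
have s2 : {subset s' <= undup (s ++ s')}.
  by move=> a h; rewrite mem_undup mem_cat h orbT.
have [uU _ p0 e1] := urep_ext r1 _ (undup_uniq _) s1 sA.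
have [_ _ p0' e2] := urep_ext r2 _ (undup_uniq _) s2 sA.
move=> a; case aU: (a \in undup (s ++ s')); last first.
  by rewrite p0 ?p0' ?aU.
apply/eqP; rewrite -subr_eq0; apply/eqP.
move: a aU; apply: (ind _ uU sA (fun a => p a - p' a)).
rewrite (eq_bigr (fun a => peval (p a) T a - peval (p' a) T a)); last first.
  by move=> a _; rewrite pevalB.
by rewrite sumrB -e1 -e2 subrr.
Qed.

Lemma inspan0 (L : seq X) : inspan L 0.
Proof. by exists (fun _ => 0); rewrite big1 // => v _; rewrite scale0r. Qed.

Lemma inspan_lin (L : seq X) c u v : inspan L u -> inspan L v -> inspan L (c *: u + v).
Proof.
move=> [cu ->] [cv ->]; exists (fun w => c * cu w + cv w).
rewrite scaler_sumr -big_split /=; apply: eq_bigr => w _.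
by rewrite scalerDl scalerA.
Qed.

Lemma inspan_mem (L : seq X) v : uniq L -> v \in L -> inspan L v.
Proof.
move=> uL vL; exists (fun w => if w == v then 1 else 0).
rewrite (eq_bigr (fun w => if w == v then w else 0)); last first.
  by move=> w _; case: eqP => _; rewrite ?scale1r ?scale0r.
rewrite (@big_support _ _ [:: v] L) //.
- by rewrite big_seq1 eqxx.
- by move=> w; rewrite inE => /eqP ->.
- by move=> w; rewrite inE => /negbTE ->.
Qed.

Lemma inspan_sum (L : seq X) (I : Type) (t : seq I) (b : I -> k) (g : I -> X) :
  (forall i, inspan L (g i)) -> inspan L (\sum_(i <- t) b i *: g i).
Proof.
move=> H; elim: t => [|i t IH]; first by rewrite big_nil; exact: inspan0.
by rewrite big_cons; apply: inspan_lin.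
Qed.

Lemma inspan_sum_in (L : seq X) (t : seq X) (b : X -> k) (g : X -> X) :
  (forall i, i \in t -> inspan L (g i)) -> inspan L (\sum_(i <- t) b i *: g i).
Proof.
move=> H; rewrite big_seq_cond.
apply: big_ind; first exact: inspan0.
  by move=> x y hx hy; rewrite -[x]scale1r; apply: inspan_lin.
move=> i /andP [it _]; rewrite -[_ *: _]addr0; apply: inspan_lin; last exact: inspan0.
exact: H.
Qed.


Lemma kill {q z} : no_fd_invariant T -> q != 0 -> peval q T z = 0 -> z = 0.
Proof.
move=> nfd qnz qz.
set n := (size q).-1.
have sq : size q = n.+1 by rewrite /n prednK // size_poly_gt0.
set L := undup [seq iter i T z | i <- iota 0 n].
have uL : uniq L by exact: undup_uniq.
have memL : forall i, (i < n)%N -> inspan L (iter i T z).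
  move=> i lt; apply: inspan_mem => //.
  by rewrite mem_undup; apply: map_f; rewrite mem_iota.
have lnz : lead_coef q != 0 by rewrite lead_coef_eq0.
have top : iter n T z = - (lead_coef q)^-1 *: \sum_(i < n) q`_i *: iter i T z.
  move: qz; rewrite (@peval_ext _ n.+1) ?sq // big_ord_recr /=.
  rewrite -/(nat_of_ord (@ord_max n)) /= lead_coefE sq /= => /eqP.
  rewrite addrC addr_eq0 => /eqP e.
  by rewrite -{1}(scalerK lnz (iter n T z)) e scaleNr scalerN.
have topL : inspan L (iter n T z).
  rewrite top -[_ *: _]addr0; apply: inspan_lin; last exact: inspan0.
  apply: inspan_sum => i; exact: memL.
have inv : forall x, inspan L x -> inspan L (T x).
  move=> x [c ->]; rewrite linear_sum.
  rewrite (eq_bigr (fun v => c v *: T v)); last by move=> v _; rewrite linearZ.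
  apply: inspan_sum_in => v; rewrite mem_undup => /mapP [i].
  rewrite mem_iota add0n => /andP [_ lt] ->.
  rewrite -iterS; case: (ltnP i.+1 n) => h; first exact: memL.
  have -> : i.+1 = n by apply/eqP; rewrite eqn_leq h lt.
  exact: topL.
have -> : z = iter 0 T z by [].
case: (posnP n) => [n0|npos].
  move: top; rewrite n0 /= => ->; by rewrite big_ord0 scaler0.
exact: (nfd L inv _ (memL 0%N npos)).
Qed.

Lemma J_unique {x q1 p1 q2 p2 s1 s2} : T_independent T A ->
  q1 != 0 -> urep (peval q1 T x) s1 p1 ->
  q2 != 0 -> urep (peval q2 T x) s2 p2 ->
  forall a, tofracp (p1 a) / tofracp q1 = tofracp (p2 a) / tofracp q2.
Proof.
move=> ind n1 r1 n2 r2 a.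
have e : q2 * p1 a = q1 * p2 a.
  apply: (@urep_uniq (peval (q2 * q1) T x) s1 s2 (fun a => q2 * p1 a) (fun a => q1 * p2 a) ind).
    by rewrite pevalM; apply: urep_peval.
  by rewrite mulrC pevalM; apply: urep_peval.
apply/eqP; rewrite eqr_div ?tofrac_eq0 //.
by rewrite /tofracp -!tofracM mulrC e mulrC.
Qed.


Definition rpick (x : X) : {poly k} * (X -> {poly k}) :=
  epsilon (inhabits (1, fun _ => 0)) (fun r => is_rep A T x r.1 r.2).

Definition Jdef (x : X) : X -> ratfun k :=
  fun a => tofracp ((rpick x).2 a) / tofracp (rpick x).1.

Lemma F_rep x : F_set A T x -> exists q s p, q != 0 /\ urep (peval q T x) s p.
Proof.
move=> [q [qnz /E_urep]] [s [p r]]; by exists q, s, p.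
Qed.

Lemma rep_F x q s p : q != 0 -> urep (peval q T x) s p -> F_set A T x.
Proof. move=> qnz r; exists q; split => //; exact: urep_E r. Qed.

Lemma rpickP {x} : F_set A T x -> is_rep A T x (rpick x).1 (rpick x).2.
Proof.
move=> /F_rep [q [s [p [qnz r]]]].
apply: (epsilon_spec (inhabits (1, fun _ : X => (0:{poly k}))) (fun r => is_rep A T x r.1 r.2)).
by exists (q, p); split => //; exists s.
Qed.


Lemma F0 : F_set A T 0.
Proof. apply: (@rep_F 0 1 [::] (fun _ => 0)) => //; first exact: oner_neq0.
rewrite peval_x0; exact: urep0. Qed.

Lemma Flin_rep c {x y q1 s1 p1 q2 s2 p2} :
  urep (peval q1 T x) s1 p1 -> urep (peval q2 T y) s2 p2 ->
  urep (peval (q1 * q2) T (c *: x + y)) (undup (s1 ++ s2))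
    (fun a => c *: (q2 * p1 a) + q1 * p2 a).
Proof.
move=> r1 r2.
have -> : peval (q1 * q2) T (c *: x + y) =
   c *: peval q2 T (peval q1 T x) + peval q1 T (peval q2 T y).
  rewrite peval_linx; congr (_ *: _ + _); last exact: pevalM.
  by rewrite mulrC pevalM.
apply: urep_add; first apply: urep_scale; exact: urep_peval.
Qed.

Lemma Flin c {x y} : F_set A T x -> F_set A T y -> F_set A T (c *: x + y).
Proof.
move=> /F_rep [q1 [s1 [p1 [n1 r1]]]] /F_rep [q2 [s2 [p2 [n2 r2]]]].
apply: rep_F; last exact: (Flin_rep c r1 r2).
exact: mulf_neq0.
Qed.

Lemma FT_rep {x q s p} : urep (peval q T x) s p ->
  urep (peval q T (T x)) s (fun a => 'X * p a).
Proof. move=> r; rewrite -pevalT -pevalXp; exact: urep_peval. Qed.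

Lemma FT {x} : F_set A T x -> F_set A T (T x).
Proof.
move=> /F_rep [q [s [p [n r]]]]; apply: rep_F n (FT_rep r).
Qed.

Lemma mk_rep {x q s p} : q != 0 -> urep (peval q T x) s p -> is_rep A T x q p.
Proof. by move=> n r; split => //; exists s. Qed.

Lemma Jrep {x q p} : T_independent T A -> F_set A T x -> is_rep A T x q p ->
  forall a, Jdef x a = tofracp (p a) / tofracp q.
Proof.
move=> ind Fx [n [s r]] a.
have [n' [s' r']] := rpickP Fx.
exact: (J_unique ind n' r' n r).
Qed.

Lemma Jlin c {x y} : T_independent T A -> F_set A T x -> F_set A T y ->
  Jdef (c *: x + y) = (fun a => scaleRA c (Jdef x) a + Jdef y a).
Proof.
move=> ind Fx Fy; apply: functional_extensionality => a.
  have [n1 [s1 r1]] := rpickP Fx; have [n2 [s2 r2]] := rpickP Fy.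
  rewrite (Jrep ind (Flin c Fx Fy) (mk_rep (mulf_neq0 n1 n2) (Flin_rep c r1 r2))).
  rewrite /scaleRA /Jdef /=.
  exact: (@ratid k ((rpick x).2 a) (rpick x).1 ((rpick y).2 a) (rpick y).1 c n1 n2).
Qed.

Lemma JT {x} : T_independent T A -> F_set A T x -> Jdef (T x) = MA (Jdef x).
Proof.
move=> ind Fx; apply: functional_extensionality => a.
  have [n [s r]] := rpickP Fx.
  rewrite (Jrep ind (FT Fx) (mk_rep n (FT_rep r))).
  by rewrite /MA /Jdef /tofracp tofracM mulrA.
Qed.

Lemma main_sec :
  (exists x : X, x != 0) ->
  no_fd_invariant T ->
  T_independent T A ->
  [/\ F_set A T 0,
      (forall (c : k) (x y : X), F_set A T x -> F_set A T y ->
         F_set A T (c *: x + y)),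
      (forall x, F_set A T x -> F_set A T (T x)),
      (forall x q1 p1 q2 p2, F_set A T x ->
         is_rep A T x q1 p1 -> is_rep A T x q2 p2 ->
         forall a, A a ->
           tofracp (p1 a) / tofracp q1 = tofracp (p2 a) / tofracp q2) &
      exists J : X -> X -> ratfun k,
        [/\ ((forall x q p, F_set A T x -> is_rep A T x q p ->
               forall a, A a -> J x a = tofracp (p a) / tofracp q) /\
             (forall x, F_set A T x -> in_RA A (J x))),
            (forall (c : k) x y, F_set A T x -> F_set A T y ->
               J (c *: x + y) = (fun a => scaleRA c (J x) a + J y a)),
            (forall x y, F_set A T x -> F_set A T y -> J x = J y -> x = y),
            (forall x, F_set A T x -> J (T x) = MA (J x)) &
            forall x, F_set A T x ->
               exists y, F_set A T y /\ J y = MA (J x)]].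
Proof.
move=> _ nfd ind; split.
- exact: F0.
- move=> c x y; exact: Flin.
- move=> x; exact: FT.
- move=> x q1 p1 q2 p2 _ [n1 [s1 r1]] [n2 [s2 r2]] a _.
  exact: (J_unique ind n1 r1 n2 r2).
exists Jdef; split.
- split; first by move=> x q p Fx r a _; exact: Jrep.
  move=> x Fx; have [n [s [us sA p0 _]]] := rpickP Fx; split; last first.
    by exists s => a /p0; rewrite /Jdef => ->; rewrite /tofracp tofrac0 mul0r.
  move=> a nA; rewrite /Jdef p0 ?/tofracp ?tofrac0 ?mul0r //.
  by apply/negP => /sA.
- move=> c x y Fx Fy; exact: Jlin.
- move=> x y Fx Fy eJ.
  have Fz : F_set A T ((-1) *: y + x) by apply: Flin.
  have [n [s r]] := rpickP Fz.
  have p0 : forall a, (rpick ((-1) *: y + x)).2 a = 0.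
    move=> a; have := Jrep ind Fz (mk_rep n r) a.
    rewrite (_ : Jdef _ a = 0); last first.
      rewrite (Jlin _ ind Fy Fx) /scaleRA eJ /tofracp polyCN polyC1 tofracN tofrac1.
      by rewrite mulN1r addNr.
    move=> /esym /eqP; rewrite mulf_eq0 invr_eq0 /tofracp !tofrac_eq0 (negbTE n) orbF.
    by move=> /eqP.
  have z0 : (-1) *: y + x = 0.
    apply: (kill nfd n); case: r => _ _ _ ->.
    by apply: big1 => a _; rewrite p0 peval0p.
  by apply/eqP; rewrite -subr_eq0 addrC -scaleN1r z0.
- move=> x Fx; exact: JT.
- move=> x Fx; exists (T x); split; first exact: FT.
  by rewrite JT.
Qed.
End Peval.

Theorem lemma2p3 (k : fieldType) (X : lmodType k) (T : {linear X -> X})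
    (A : X -> Prop) :
  (exists x : X, x != 0) ->
  no_fd_invariant T ->
  T_independent T A ->
  (* F(A,T) is a T-invariant linear subspace *)
  [/\ F_set A T 0,
      (forall (c : k) (x y : X), F_set A T x -> F_set A T y ->
         F_set A T (c *: x + y)),
      (forall x, F_set A T x -> F_set A T (T x)),
  (* f_{x,a} = p_a / q does not depend on the representation *)
      (forall x q1 p1 q2 p2, F_set A T x ->
         is_rep A T x q1 p1 -> is_rep A T x q2 p2 ->
         forall a, A a ->
           tofracp (p1 a) / tofracp q1 = tofracp (p2 a) / tofracp q2) &
  (* the map J *)
      exists J : X -> X -> ratfun k,
        [/\ ((forall x q p, F_set A T x -> is_rep A T x q p ->
               forall a, A a -> J x a = tofracp (p a) / tofracp q) /\
             (forall x, F_set A T x -> in_RA A (J x))),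
            (forall (c : k) x y, F_set A T x -> F_set A T y ->
               J (c *: x + y) = (fun a => scaleRA c (J x) a + J y a)),
            (forall x y, F_set A T x -> F_set A T y -> J x = J y -> x = y),
            (forall x, F_set A T x -> J (T x) = MA (J x)) &
            (* in particular J(F(A,T)) is M^(A)-invariant *)
            forall x, F_set A T x ->
               exists y, F_set A T y /\ J y = MA (J x)]].
Proof. exact: main_sec. Qed.
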